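(* Let $(M,g)$ be a semi-Riemannian manifold with Levi-Civita connection $\overset{\circ}{\nabla}$ and let $\pi$ be a one-form on $M$. Define the $(1,2)$-tensor field $$U(\omega,X,Y)=\frac12\left(X^\flat\big(\pi(\omega^\sharp)Y-\pi(Y)\omega^\sharp\big)+Y^\flat\big(\pi(\omega^\sharp)X-\pi(X)\omega^\sharp\big)\right)$$ and $\nabla_XY=\overset{\circ}{\nabla}_XY+U(-,X,Y)$. Then $(\nabla,U)$ is a Schrödinger connection (called the Yano-Schrödinger connection).
   Context: $X^\flat=g(X,-)$ (so $X^\flat(V)=g(X,V)$), $\omega^\sharp=g^{-1}(\omega,-)$. For a $(1,2)$-tensor field $U$, $U(-,X,Y)$ denotes the vector field with $\omega(U(-,X,Y))=U(\omega,X,Y)$. A Schrödinger connection is an affine connection $\nabla_XY=\overset{\circ}{\nabla}_XY+U(-,X,Y)$ where $U$ satisfies, for all vector fields $X,Y$ and one-forms $\omega$: (a) $U(\omega,X,Y)=U(\omega,Y,X)$, and (b) $U(\omega,X,Y)+U(\omega,Y,X)+U(X^\flat,\omega^\sharp,Y)+U(X^\flat,Y,\omega^\sharp)+U(Y^\flat,\omega^\sharp,X)+U(Y^\flat,X,\omega^\sharp)=0$. *)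

(* Defs.v *)
(* Pointwise (single tangent space) model of the tensor algebra. *)
From mathcomp Require Import all_boot all_order all_algebra.
Set Implicit Arguments. Unset Strict Implicit. Unset Printing Implicit Defensive.
Import Order.TTheory GRing.Theory Num.Theory.
Local Open Scope ring_scope.

(* Tangent vectors at a point: row vectors 'rV_n (components in a basis).
   Cotangent vectors: also 'rV_n (components in the dual basis).
   The metric at the point: a symmetric invertible matrix G (any signature). *)

Definition pair (R : ringType) (n : nat) (omega v : 'rV[R]_n) : R :=
  (omega *m v^T) 0 0.

Definition flat (R : ringType) (n : nat) (G : 'M[R]_n) (X : 'rV[R]_n) : 'rV[R]_n :=
  X *m G.

Definition sharp (R : comUnitRingType) (n : nat) (G : 'M[R]_n) (omega : 'rV[R]_n)
  : 'rV[R]_n := omega *m invmx G.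

Definition is_tensor12 (R : ringType) (n : nat)
  (U : 'rV[R]_n -> 'rV[R]_n -> 'rV[R]_n -> R) : Prop :=
  (forall a o1 o2 X Y, U (a *: o1 + o2) X Y = a * U o1 X Y + U o2 X Y) /\
  (forall a o X1 X2 Y, U o (a *: X1 + X2) Y = a * U o X1 Y + U o X2 Y) /\
  (forall a o X Y1 Y2, U o X (a *: Y1 + Y2) = a * U o X Y1 + U o X Y2).

Definition schrodinger_tensor (R : comUnitRingType) (n : nat) (G : 'M[R]_n)
  (U : 'rV[R]_n -> 'rV[R]_n -> 'rV[R]_n -> R) : Prop :=
  is_tensor12 U /\
  (forall omega X Y, U omega X Y = U omega Y X) /\
  (forall omega X Y,
     U omega X Y + U omega Y X
     + U (flat G X) (sharp G omega) Y + U (flat G X) Y (sharp G omega)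
     + U (flat G Y) (sharp G omega) X + U (flat G Y) X (sharp G omega) = 0).

Definition YS_U (R : fieldType) (n : nat) (G : 'M[R]_n) (pi : 'rV[R]_n)
  (omega X Y : 'rV[R]_n) : R :=
  2^-1 * ( pair (flat G X) (pair pi (sharp G omega) *: Y - pair pi Y *: sharp G omega)
         + pair (flat G Y) (pair pi (sharp G omega) *: X - pair pi X *: sharp G omega)).

(* Main.v *)
Require Import Defs.
From mathcomp Require Import all_boot all_order all_algebra.
From mathcomp Require Import ring.
Set Implicit Arguments. Unset Strict Implicit. Unset Printing Implicit Defensive.
Import Order.TTheory GRing.Theory Num.Theory.
Local Open Scope ring_scope.

Section H.
Variables (R : fieldType) (n : nat).
Implicit Types (a b u v : 'rV[R]_n).

Lemma pairDr a u v : pair a (u + v) = pair a u + pair a v.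
Proof. by rewrite /pair linearD /= mulmxDr mxE. Qed.
Lemma pairZr a c u : pair a (c *: u) = c * pair a u.
Proof. by rewrite /pair linearZ /= -scalemxAr mxE. Qed.
Lemma pairNr a u : pair a (- u) = - pair a u.
Proof. by rewrite -scaleN1r pairZr mulN1r. Qed.
Lemma pairDl a u v : pair (u + v) a = pair u a + pair v a.
Proof. by rewrite /pair mulmxDl mxE. Qed.
Lemma pairZl a c u : pair (c *: u) a = c * pair u a.
Proof. by rewrite /pair -scalemxAl mxE. Qed.
Lemma pairC u v : pair u v = pair v u.
Proof.
rewrite /pair !mxE; apply: eq_bigr => i _; by rewrite !mxE mulrC.
Qed.

Variables (G : 'M[R]_n).
Hypothesis (GT : G^T = G) (GU : G \in unitmx).

Lemma flatD u v : flat G (u + v) = flat G u + flat G v.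
Proof. by rewrite /flat mulmxDl. Qed.
Lemma flatZ c u : flat G (c *: u) = c *: flat G u.
Proof. by rewrite /flat scalemxAl. Qed.
Lemma sharpD u v : sharp G (u + v) = sharp G u + sharp G v.
Proof. by rewrite /sharp mulmxDl. Qed.
Lemma sharpZ c u : sharp G (c *: u) = c *: sharp G u.
Proof. by rewrite /sharp scalemxAl. Qed.
Lemma sharp_flat u : sharp G (flat G u) = u.
Proof. by rewrite /sharp /flat -mulmxA mulmxV // mulmx1. Qed.
Lemma flat_sharp u : flat G (sharp G u) = u.
Proof. by rewrite /sharp /flat -mulmxA mulVmx // mulmx1. Qed.
Lemma flat_sym u v : pair (flat G u) v = pair (flat G v) u.
Proof.
by rewrite pairC /pair /flat trmx_mul GT mulmxA.
Qed.
Lemma flat_sharp_pair u w : pair (flat G u) (sharp G w) = pair w u.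
Proof. by rewrite flat_sym flat_sharp. Qed.
End H.

Theorem mainTheorem6 (R : realFieldType) (n : nat) (G : 'M[R]_n) (pi : 'rV[R]_n) :
  G^T = G -> G \in unitmx -> schrodinger_tensor G (YS_U G pi).
Proof.
move=> GT GU.
split; [split; [|split]|split].
- move=> a o1 o2 X Y; rewrite /YS_U !sharpD !sharpZ.
  rewrite !(pairDr, pairZr, pairNr, pairDl, pairZl, flatD, flatZ, scalerDl, scalerDr, scalerN, scalerBl, scalerA).
  ring.
- move=> a o X1 X2 Y; rewrite /YS_U.
  rewrite !(pairDr, pairZr, pairNr, pairDl, pairZl, flatD, flatZ).
  ring.
- move=> a o X Y1 Y2; rewrite /YS_U.
  rewrite !(pairDr, pairZr, pairNr, pairDl, pairZl, flatD, flatZ).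
  ring.
- move=> o X Y; rewrite /YS_U; ring.
- move=> o X Y; rewrite /YS_U.
  rewrite !(pairDr, pairZr, pairNr, (sharp_flat GU), (flat_sharp GU), (flat_sharp_pair GT GU)).
  rewrite [pair (flat G Y) X](flat_sym GT).
  rewrite [pair o X]pairC [pair o Y]pairC.
  ring.
Qed.
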